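(* Let $m\geq 2$ and $V=\mathbb{C}^{2m}$ with the symplectic form and Wronski map described in the context. For every $H\in\mathrm{Gr}(m,V)$ we have $\mathrm{Wr}(H^\angle)=\mathrm{Wr}(H)$.
   Context: $V=\mathbb{C}^{2m}$ has basis $\mathbf{e}_0,\dots,\mathbf{e}_{2m-1}$ with dual basis $\mathbf{e}_0^*,\dots,\mathbf{e}_{2m-1}^*$ of $V^*$. Identify $V^*$ with $\mathbb{C}_{2m-1}[t]$ (polynomials of degree $\le 2m-1$) via $\sum_i u_i\mathbf{e}_i^*\mapsto\sum_i u_it^i/i!$. $V$ carries the symplectic form $\langle p,q\rangle=\sum_{i=0}^{2m-1}(-1)^ip_iq_{2m-1-i}$ for $p=\sum p_i\mathbf{e}_i$, $q=\sum q_i\mathbf{e}_i$. For $H\in\mathrm{Gr}(m,V)$ (the Grassmannian of $m$-dimensional subspaces), $H^\angle=\{v\in V:\langle u,v\rangle=0\ \forall u\in H\}$, again $m$-dimensional. For $H\in\mathrm{Gr}(m,V)$, let $f_1,\dots,f_m\in\mathbb{C}_{2m-1}[t]$ be a basis of its annihilator $H^\perp\subset V^*$; $\mathrm{Wr}(H)\in\mathbb{P}(\mathbb{C}_{m^2}[t])$ is the class of the Wronskian $\det(f_j^{(i-1)}(t))_{i,j=1}^m$, which is well defined up to a nonzero scalar. *)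

(* Defs.v *)
From HB Require Import structures.
From mathcomp Require Import all_boot all_order all_algebra.
From mathcomp Require Import reals.
From mathcomp.real_closed Require Import complex.
Set Implicit Arguments. Unset Strict Implicit. Unset Printing Implicit Defensive.
Import Order.TTheory GRing.Theory Num.Theory.
Local Open Scope ring_scope.

Section Defs.
Variable F : fieldType.

(* Subspaces of V = F^n are represented by the row space of a matrix
   (mxalgebra).  Vectors of V and of V^* are row vectors 'rV_n, with the
   pairing e_i^*(e_j) = delta_ij, i.e. u(v) = \sum_i u_i v_i. *)

(* Gram matrix of the symplectic form on F^(2m):
   <p,q> = \sum_i (-1)^i p_i q_(2m-1-i) = p *m sympJ *m q^T *)
Definition sympJ (m : nat) : 'M[F]_(m.*2) :=
  \matrix_(i < m.*2, j < m.*2) (if (i + j == m.*2.-1)%N then (-1) ^+ i else 0).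

(* H^angle = { v | <u,v> = 0 for all u in H } : u *m J *m v^T = 0 for all rows u
   of H, i.e. v *m (H *m J)^T = 0. *)
Definition symp_perp (m : nat) (H : 'M[F]_(m.*2)) : 'M[F]_(m.*2) :=
  kermx ((H *m sympJ m)^T).

Definition annih (n : nat) (H : 'M[F]_n) : 'M[F]_n := kermx H^T.

(* Identification V^* = F_(n-1)[t] : sum_i u_i e_i^* |-> sum_i u_i t^i / i! *)
Definition dual_to_poly (n : nat) (u : 'rV[F]_n) : {poly F} :=
  \sum_(i < n) (u 0 i / (i`!)%:R) *: 'X^i.

Definition wronskian (k : nat) (f : 'I_k -> {poly F}) : {poly F} :=
  \det (\matrix_(i < k, j < k) (f j)^`(i)).

Definition Wr (n : nat) (H : 'M[F]_n) : {poly F} :=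
  wronskian (fun j => dual_to_poly (row j (row_base (annih H)))).

(* Equality in the projective space P(F[t]): equal up to a nonzero scalar. *)
Definition proj_eq (p q : {poly F}) : Prop :=
  exists2 c : F, c != 0 & p = c *: q.

End Defs.

(* Main.v *)
Require Import Defs.
From HB Require Import structures.
From mathcomp Require Import all_boot all_order all_algebra.
From mathcomp Require Import reals.
From mathcomp.real_closed Require Import complex.
From mathcomp Require Import zify.
Import Order.TTheory GRing.Theory Num.Theory.
Local Open Scope ring_scope.
Local Open Scope complex_scope.
Set Implicit Arguments. Unset Strict Implicit.

Section Aux.
Variable F : numFieldType.

Lemma deriv0_const (p : {poly F}) : p^`() = 0 -> p = (p`_0)%:P.
Proof.
move=> h; apply/polyP => i; rewrite coefC; case: i => [//|j] /=.
have := congr1 (fun q : {poly F} => q`_j) h; rewrite coef_deriv coef0 => /eqP.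
by rewrite mulrn_eq0 /= => /eqP.
Qed.

Definition pairing (N : nat) (f g : {poly F}) : {poly F} :=
  \sum_(a < N) (-1) ^+ a * (f^`(a) * g^`(N - a.+1)).

Lemma pairing_deriv N (f g : {poly F}) : (size f <= N)%N -> (size g <= N)%N ->
  (pairing N f g)^`() = 0.
Proof.
move=> hf hg; rewrite /pairing raddf_sum /=.
pose T (a : nat) := (-1) ^+ a * (f^`(a) * g^`(N - a)).
transitivity (\sum_(a < N) - (T a.+1 - T a)).
  apply: eq_bigr => a _.
  have d0 : ((-1 : {poly F}) ^+ a)^`() = 0 by rewrite -polyCN -rmorphXn derivC.
  rewrite derivM d0 mul0r add0r derivM -!derivnS subnSK //.
  rewrite /T exprS !mulN1r mulrDr opprB addrC.
  by rewrite -mulNr opprK.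
rewrite sumrN -(big_mkord xpredT (fun a => T a.+1 - T a)) telescope_sumr //.
rewrite /T subnn subn0 (derivn_poly0 hf) (derivn_poly0 hg).
by rewrite !(mul0r, mulr0) subrr oppr0.
Qed.
End Aux.
Section Aux2.
Variable F : numFieldType.

Definition ek (k : nat) : {poly F} := (k`!%:R)^-1 *: 'X^k.
Definition Emx N : 'M[{poly F}]_N := \matrix_(k, a) (ek k)^`(a).

Lemma ek_coef0 k a : ((ek k)^`(a))`_0 = (a == k)%:R.
Proof.
rewrite /ek derivnZ derivnXn coefZ coefMn coefXn.
case: (ltngtP a k) => h.
- by rewrite eq_sym subn_eq0 leqNgt h /= mul0rn mulr0.
- by rewrite ffact_small // mulr0n mulr0.
- rewrite h subnn eqxx ffactnn mulVf //.
  by rewrite pnatr_eq0 -lt0n fact_gt0.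
Qed.

Lemma size_ek k : (size (ek k) <= k.+1)%N.
Proof. by rewrite /ek (leq_trans (size_scale_leq _ _)) // size_polyXn. Qed.

Lemma EJE N (J : 'M[F]_N)
  (hJ : forall i j : 'I_N, J i j = if (i + j == N.-1)%N then (-1) ^+ i else 0) :
  Emx N *m map_mx polyC J *m (Emx N)^T = map_mx polyC J.
Proof.
apply/matrixP => k l; rewrite /Emx !mxE.
transitivity (pairing N (ek k) (ek l)).
  rewrite /pairing (reindex_inj rev_ord_inj) /=; apply: eq_bigr => b _.
  rewrite !mxE (bigD1 b) //= big1 ?addr0; last first.
    move=> a /negbTE hab; rewrite [in X in _ * X]mxE hJ.
    case: ifP => [/eqP h|]; last by rewrite mulr0.
    suff e : a = b by rewrite e eqxx in hab.
    by apply: val_inj => /=; move: h (ltn_ord a) (ltn_ord b); rewrite /= ; lia.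
  rewrite !mxE hJ /= (_ : (b + (N - b.+1) == N.-1)%N); last first.
    by apply/eqP; move: (ltn_ord b); lia.
  rewrite rmorphXn rmorphN rmorph1 /=.
  by rewrite -mulrA mulrCA.
have sk : (size (ek k) <= N)%N by apply: leq_trans (size_ek k) _.
have sl : (size (ek l) <= N)%N by apply: leq_trans (size_ek l) _.
rewrite (deriv0_const (pairing_deriv sk sl)) hJ; congr (_%:P).
rewrite /pairing coef_sum (bigD1 k) //= big1 ?addr0; last first.
  move=> a hak.
  rewrite -polyCN -rmorphXn coefCM coef0M !ek_coef0.
  have hak' : (nat_of_ord a == nat_of_ord k) = false by exact: negbTE.
  by rewrite hak' mul0r mulr0.
rewrite -polyCN -rmorphXn coefCM coef0M !ek_coef0 eqxx mul1r.
have -> : (N - k.+1 == l)%N = (k + l == N.-1)%N.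
  by apply/eqP/eqP; move: (ltn_ord k) (ltn_ord l); lia.
by case: ifP; rewrite ?mulr1 ?mulr0.
Qed.
End Aux2.

Lemma core (R : comNzRingType) m (A C : 'M[R]_(m, m + m)) (Q : 'M[R]_(m + m, m)) :
  A *m Q = 0 -> \det (col_mx A C) * \det (dsubmx Q) = \det (lsubmx A) * \det (C *m Q).
Proof.
move=> hAQ.
have e : col_mx A C *m block_mx 1%:M (usubmx Q) 0 (dsubmx Q)
         = block_mx (lsubmx A) 0 (lsubmx C) (C *m Q).
  have hA : A = row_mx (lsubmx A) (rsubmx A) by rewrite hsubmxK.
  have hC : C = row_mx (lsubmx C) (rsubmx C) by rewrite hsubmxK.
  have hQ : Q = col_mx (usubmx Q) (dsubmx Q) by rewrite vsubmxK.
  move: hAQ; rewrite {1}hA {1}hQ mul_row_col => hAQ.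
  rewrite {1}hA {1}hC -block_mxEv mulmx_block !mulmx1 !mulmx0 !addr0 hAQ.
  by rewrite -mul_row_col -hC -hQ.
have := congr1 determinant e.
by rewrite det_mulmx det_ublock det1 mul1r det_lblock.
Qed.

Section Aux3.
Variable F : numFieldType.

Lemma antidiag_unit n (M : 'M[F]_n) (s : 'I_n -> F) (hs : forall i, s i * s i = 1)
  (hM : forall i j, M i j = if j == rev_ord i then s i else 0) : M *m M^T = 1%:M.
Proof.
apply/matrixP => i k; rewrite !mxE (bigD1 (rev_ord i)) //= big1 ?addr0; last first.
  by move=> j /negbTE hj; rewrite mxE !hM hj mul0r.
rewrite mxE !hM eqxx (inj_eq rev_ord_inj).
by case: eqP => [->|]; rewrite ?mulr0 ?hs.
Qed.

Lemma antidiag_det n (M : 'M[F]_n) (s : 'I_n -> F) (hs : forall i, s i * s i = 1)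
  (hM : forall i j, M i j = if j == rev_ord i then s i else 0) : \det M != 0.
Proof.
apply/eqP => h0; have := congr1 determinant (antidiag_unit hs hM).
by rewrite det_mulmx det_tr h0 mul0r det1 => /eqP; rewrite eq_sym oner_eq0.
Qed.

Lemma derivn_ek k : (@ek F k)^`(k) = 1.
Proof.
rewrite /ek derivnZ derivnXn subnn expr0 ffactnn -mul_polyC -polyC1 -polyCMn -polyCM.
rewrite -mulr_natr mul1r mulVf //.
by rewrite pnatr_eq0 -lt0n fact_gt0.
Qed.

Lemma det_Emx N : \det (Emx F N) = 1.
Proof.
rewrite det_trig; last first.
  apply/is_trig_mxP => i j hij; rewrite mxE derivn_poly0 //.
  exact: leq_trans (size_ek _ _) hij.
by rewrite big1 // => i _; rewrite mxE derivn_ek.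
Qed.

Lemma wr_E N k (U : 'M[F]_(k, N)) (i : nat) j :
  (dual_to_poly (row j U))^`(i) = \sum_(c < N) (U j c)%:P * (ek F c)^`(i).
Proof.
rewrite /dual_to_poly raddf_sum /=; apply: eq_bigr => c _.
by rewrite mxE mul_polyC -derivnZ /ek scalerA.
Qed.
End Aux3.

Section Main.
Variable F : numFieldType.

Lemma mainN m N (e : (m + m = N)%N) (J : 'M[F]_N)
  (hJ : forall i j : 'I_N, J i j = if (i + j == N.-1)%N then (-1) ^+ i else 0)
  (U V : 'M[F]_(m, N)) : row_free U -> row_free V -> U *m J *m V^T = 0 ->
  proj_eq (wronskian (fun j => dual_to_poly (row j V)))
          (wronskian (fun j => dual_to_poly (row j U))).
Proof.
case: N / e in J hJ U V * => hU hV hUV.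
have hJ' : forall i j, J i j = if j == rev_ord i then (-1) ^+ i else 0.
  move=> i j; rewrite hJ; have hi := ltn_ord i; have hj := ltn_ord j.
  case: (eqVneq j (rev_ord i)) => [->|hne].
    by rewrite /= (_ : (_ == _) = true) //; apply/eqP; lia.
  rewrite (_ : (_ == _) = false) //; apply/negbTE/eqP => h; move/eqP: hne; apply.
  by apply: val_inj => /=; lia.
have sJ : forall i : 'I_(m + m), (-1 : F) ^+ i * (-1) ^+ i = 1.
  by move=> i; rewrite -exprMn mulrNN mulr1 expr1n.
have JJt := antidiag_unit sJ hJ'.
have JtJ := mulmx1C JJt.
have [Y1 hY1] := row_freeP hV.
have [Y0 hY0] := row_freeP hU.
pose K := J *m V^T.
have hUK : U *m K = 0 by rewrite /K mulmxA.
pose C0 := Y1^T *m J^T.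
have hC0K : C0 *m K = 1%:M.
  by rewrite /C0 /K mulmxA -(mulmxA Y1^T) JtJ mulmx1 -trmx_mul hY1 trmx1.
pose Y := Y0 - K *m (C0 *m Y0).
have hUY : U *m Y = 1%:M by rewrite mulmxBr hY0 mulmxA hUK mul0mx subr0.
have hC0Y : C0 *m Y = 0 by rewrite mulmxBr mulmxA hC0K mul1mx subrr.
pose X0 := col_mx U C0.
have hX0 : X0 *m row_mx Y K = 1%:M.
  by rewrite mul_col_row hUY hUK hC0Y hC0K -scalar_mx_block.
have dX0 : \det X0 != 0.
  apply/eqP => h; have := congr1 determinant hX0.
  by rewrite det_mulmx h mul0r det1 => /eqP; rewrite eq_sym oner_eq0.
set E := Emx F (m + m).
pose A := map_mx polyC U *m E.
pose C := map_mx polyC C0 *m E.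
pose Q := map_mx polyC J *m E^T *m map_mx polyC V^T.
have EJ := EJE hJ.
have hAQ : A *m Q = 0.
  rewrite /A /Q !mulmxA -(mulmxA _ E) -(mulmxA _ (E *m _)) EJ.
  by rewrite -!map_mxM hUV map_mx0.
have hCQ : C *m Q = 1%:M.
  rewrite /C /Q !mulmxA -(mulmxA _ E) -(mulmxA _ (E *m _)) EJ.
  by rewrite -!map_mxM -mulmxA hC0K map_mx1.
have := core C hAQ.
rewrite hCQ det1 mulr1.
have -> : col_mx A C = map_mx polyC X0 *m E by rewrite /A /C -mul_col_mx map_col_mx.
rewrite det_mulmx det_Emx mulr1 det_map_mx.
have -> : \det (lsubmx A) = wronskian (fun j => dual_to_poly (row j U)).
  rewrite /wronskian -det_tr; congr (\det _); apply/matrixP => i j.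
  rewrite !mxE wr_E; apply: eq_bigr => c _; rewrite !mxE //.
pose P0 := \matrix_(i < m, r < m) if r == rev_ord i then (-1) ^+ (m + i) else (0 : F).
have -> : dsubmx Q = map_mx polyC P0 *m \matrix_(i < m, j < m) (dual_to_poly (row j V))^`(i).
  apply/matrixP => i j; rewrite /Q /P0 /E /Emx /map_mx !mxE.
  rewrite [RHS](bigD1 (rev_ord i)) //= [X in _ + X]big1 ?addr0; last first.
    move=> r /negbTE hr. rewrite [X in X * _]mxE [X in X%:P * _]mxE hr polyC0 mul0r //.
  rewrite [X in X * _]mxE [X in X%:P * _]mxE eqxx [X in _ * X]mxE wr_E big_distrr /=.
  apply: eq_bigr => b _.
  rewrite [X in _ * X]mxE [X in X%:P]mxE [X in X * _]mxE.
  rewrite (bigD1 (rev_ord (rshift m i))) //= big1 ?addr0; last first.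
    move=> a /negbTE ha.
    by rewrite [X in X * _]mxE hJ' ha polyC0 mul0r.
  rewrite [X in X * _ * _]mxE hJ' eqxx [X in _ * X * _]mxE [X in _ * X * _]mxE.
  have -> : (rev_ord (rshift m i) : nat) = (m - i.+1)%N by rewrite /=; lia.
  by rewrite rmorphXn rmorphN rmorph1 /= mulrAC -mulrA.
rewrite det_mulmx det_map_mx => h.
have dP0 : \det P0 != 0.
  apply: (@antidiag_det _ _ _ (fun i : 'I_m => (-1) ^+ (m + i))).
    by move=> i; rewrite -exprMn mulrNN mulr1 expr1n.
  by move=> i r; rewrite mxE.
exists (\det X0 * \det P0)^-1; first by rewrite invr_eq0 mulf_neq0.
rewrite -h -!mul_polyC !mulrA -!rmorphM /= -mulrA mulVf ?mulf_neq0 //.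
by rewrite mul1r.
Qed.
End Main.

Section Final.
Variable F : numFieldType.

Lemma hJrev N (J : 'M[F]_N)
  (hJ : forall i j : 'I_N, J i j = if (i + j == N.-1)%N then (-1) ^+ i else 0) :
  forall i j, J i j = if j == rev_ord i then (-1) ^+ i else 0.
Proof.
move=> i j; rewrite hJ; have hi := ltn_ord i; have hj := ltn_ord j.
case: (eqVneq j (rev_ord i)) => [->|hne].
  by rewrite /= (_ : (_ == _) = true) //; apply/eqP; lia.
rewrite (_ : (_ == _) = false) //; apply/negbTE/eqP => h; move/eqP: hne; apply.
by apply: val_inj => /=; lia.
Qed.

Lemma sympJ_unit m : sympJ F m *m (sympJ F m)^T = 1%:M :> 'M[F]_(m.*2).
Proof.
apply: (@antidiag_unit _ _ _ (fun i => (-1) ^+ i)).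
  by move=> i; rewrite -exprMn mulrNN mulr1 expr1n.
by apply: hJrev => i j; rewrite mxE.
Qed.

Lemma mainK m N (e : (m + m = N)%N) (J : 'M[F]_N)
  (hJ : forall i j : 'I_N, J i j = if (i + j == N.-1)%N then (-1) ^+ i else 0)
  k1 k2 (e1 : k1 = m) (e2 : k2 = m) (U : 'M[F]_(k1, N)) (V : 'M[F]_(k2, N)) :
  row_free U -> row_free V -> U *m J *m V^T = 0 ->
  proj_eq (wronskian (fun j => dual_to_poly (row j V)))
          (wronskian (fun j => dual_to_poly (row j U))).
Proof. by subst k1 k2; exact: mainN. Qed.

Lemma kerker n p (X : 'M[F]_(p, n)) : (kermx (kermx X^T)^T <= X)%MS.
Proof.
have sub : (X <= kermx (kermx X^T)^T)%MS.
  by apply/sub_kermxP; rewrite -[X in X *m _]trmxK -trmx_mul mulmx_ker trmx0.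
have := mxrank_leqif_sup sub => /leqifP.
rewrite !mxrank_ker !mxrank_tr mxrank_ker mxrank_tr.
have := rank_leq_col X; have := rank_leq_row X.
case: ifP => // _ _ _ h; exfalso; move: h; lia.
Qed.
End Final.

Unset Implicit Arguments. Set Strict Implicit.

Theorem lemma3p1 (R : realType) (m : nat) (hm : (2 <= m)%N)
    (H : 'M[R[i]]_(m.*2)) (hH : \rank H = m) :
  proj_eq (Wr (symp_perp H)) (Wr H).
Proof.
rewrite /Wr /symp_perp.
set J := sympJ _ m.
have JJt : J *m J^T = 1%:M := sympJ_unit _ m.
have Jfree : row_free J by rewrite row_free_unit; case: (mulmx1_unit JJt).
have hJ : forall i j : 'I_(m.*2),
    J i j = if (i + j == (m.*2).-1)%N then (-1) ^+ i else 0.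
  by move=> i j; rewrite mxE.
apply: (mainK (addnn m) hJ).
- by rewrite /annih mxrank_ker mxrank_tr hH -addnn addnK.
- rewrite /annih mxrank_ker mxrank_tr mxrank_ker mxrank_tr.
  by rewrite mxrankMfree // hH -addnn !addnK.
- exact: row_base_free.
- exact: row_base_free.
have hV : (row_base (annih (kermx (H *m J)^T)) <= H *m J)%MS.
  by rewrite eq_row_base /annih; exact: kerker.
have hUH : row_base (annih H) *m H^T = 0.
  by apply/sub_kermxP; rewrite eq_row_base submx_refl.
rewrite -(mulmxKpV hV) !trmx_mul !mulmxA -(mulmxA _ J) JJt mulmx1 hUH.
by rewrite !mul0mx.
Qed.
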